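(* Let $\mu$ satisfy Assumption A (see context), let $E$ be an atom of $\mu$, and let $(z_n)_{n\ge1}\subset\mathbb{C}^+$ be a sequence converging non-tangentially to $E$. Then $$\lim_{n}I_{\widehat\mu}(z_n)=\lim_n\frac{\int\frac{1}{|x-z_n|^2}\mu(dx)}{\big|\int\frac{1}{x-z_n}\mu(dx)\big|^2}-1=\frac{1}{\mu(\{E\})}-1.$$
   Context: Assumption A: $n_{\mathrm{ac}},n_{\mathrm{pp}},n^{\mathrm{out}}_{\mathrm{pp}}\ge1$ integers; $\mu$ is a compactly supported Borel probability measure on $\mathbb{R}$ whose singular part is supported on a finite set $\{x_1,\dots,x_{n_{\mathrm{pp}}}\}$, whose absolutely continuous part $\mu_{\mathrm{ac}}$ is supported on $n_{\mathrm{ac}}$ intervals $[E_j^-,E_j^+]$, with exactly $n^{\mathrm{out}}_{\mathrm{pp}}$ atoms outside $\mathrm{supp}(\mu_{\mathrm{ac}})$, no atom at the endpoints $E_j^\pm$, and density $\rho$ with $C_j^{-1}<\rho(x)/\big((x-E_j^-)^{t_j^-}(E_j^+-x)^{t_j^+}\big)<C_j$ a.e. on $[E_j^-,E_j^+]$ for some $-1<t_j^\pm<1$, $C_j\ge1$. $F_\mu=-1/m_\mu$ with $m_\mu(z)=\int\frac{1}{x-z}\mu(dx)$; $\widehat\mu$ is the finite Borel measure with $F_\mu(\omega)-\omega=-\int x\mu(dx)+\int\frac{1}{x-\omega}\widehat\mu(dx)$, $\omega\in\mathbb{C}^+$; $I_\nu(\omega)=\int\frac{1}{|x-\omega|^2}\nu(dx)$.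 A sequence $z_n\in\mathbb{C}^+$ converging to $E\in\mathbb{R}$ converges non-tangentially if $|(\mathrm{Re}\,z_n-E)/\mathrm{Im}\,z_n|\le C$ for some $C>0$ and all large $n$. *)

(* Defs.v *)
From HB Require Import structures.
From mathcomp Require Import all_boot all_order all_algebra.
From mathcomp Require Import all_classical all_reals all_analysis.
From mathcomp Require Import complex.
Import Order.TTheory GRing.Theory Num.Theory.
Import numFieldNormedType.Exports.

Set Implicit Arguments.
Unset Strict Implicit.
Unset Printing Implicit Defensive.

Local Open Scope ring_scope.
Local Open Scope classical_set_scope.

Section Defs.
Variable R : realType.

Definition rint (nu : {measure set R -> \bar R}) (f : R -> R) : R :=
  Rintegral nu setT f.

Definition cint (nu : {measure set R -> \bar R}) (f : R -> R[i]) : R[i] :=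
  Complex (rint nu (fun x => complex.Re (f x))) (rint nu (fun x => complex.Im (f x))).

Definition m_transform (nu : {measure set R -> \bar R}) (z : R[i]) : R[i] :=
  cint nu (fun x => (Complex x 0 - z)^-1).

Definition F_transform (nu : {measure set R -> \bar R}) (z : R[i]) : R[i] :=
  - (m_transform nu z)^-1.

Definition sqmod (w : R[i]) : R := complex.Re w ^+ 2 + complex.Im w ^+ 2.

Definition I_transform (nu : {measure set R -> \bar R}) (z : R[i]) : R :=
  rint nu (fun x => (sqmod (Complex x 0 - z))^-1).

Definition first_moment (nu : {measure set R -> \bar R}) : R := rint nu id.

Definition assumptionA (mu : probability R R) (nac npp nout : nat) : Prop :=
  [/\ (0 < nac)%N, (0 < npp)%N, (0 < nout)%N,
      (exists K : R, mu (~` `[- K, K]) = 0%E) &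
      exists (xs : 'I_npp -> R) (Em Ep : 'I_nac -> R) (rho : R -> R),
      [/\ [/\
          injective xs /\ (forall i, (0 < mu [set xs i])%E),
          (forall j, Em j < Ep j) /\
            (forall j k : 'I_nac, (j < k)%N -> Ep j < Em k) &
          [/\ measurable_fun setT rho, (forall x, 0 <= rho x) &
              (forall x, ~ (exists j, Em j <= x <= Ep j) -> rho x = 0)]],
          (forall A : set R, measurable A ->
             mu A = (\int[lebesgue_measure]_(x in A) (rho x)%:E
                     + mu (A `&` range xs))%E),
          (forall i j, xs i != Em j /\ xs i != Ep j),
          #|[set i : 'I_npp | ~~ [exists j : 'I_nac, Em j <= xs i <= Ep j]]| = nout
        &
          (forall j, exists (tm tp C : R),
             [/\ -1 < tm < 1, -1 < tp < 1, 1 <= C &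
                 {ae lebesgue_measure, forall x : R, Em j < x < Ep j ->
                    C^-1 < rho x / (powR (x - Em j) tm * powR (Ep j - x) tp) < C}])]].

Definition nontangential_cvg (z : nat -> R[i]) (E : R) : Prop :=
  [/\ (fun n => complex.Re (z n)) @ \oo --> E,
      (fun n => complex.Im (z n)) @ \oo --> (0 : R) &
      exists C : R, 0 < C /\
        \forall n \near \oo, `|(complex.Re (z n) - E) / complex.Im (z n)| <= C].

End Defs.

(* Main.v *)
Require Import Defs.
From HB Require Import structures.
From mathcomp Require Import all_boot all_order all_algebra.
From mathcomp Require Import all_classical all_reals all_analysis.
From mathcomp Require Import complex.
From mathcomp Require Import measurable_realfun.
From mathcomp Require Import ring lra.
Import Order.TTheory GRing.Theory Num.Theory.
Import numFieldNormedType.Exports.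
Local Open Scope ring_scope.
Local Open Scope classical_set_scope.
Lemma rdct (R : realType) (nu : {finite_measure set R -> \bar R})
  (f_ : nat -> R -> R) (c E M : R) :
  (forall n, measurable_fun setT (f_ n)) ->
  (\forall n \near \oo, forall x, `|f_ n x| <= M) ->
  f_ ^~ E @ \oo --> c ->
  (forall x, x != E -> f_ ^~ x @ \oo --> 0) ->
  (fun n => rint nu (f_ n)) @ \oo --> c * fine (nu [set E]).
Proof.
move=> mf [N _ HN] fE f0.
rewrite -(cvg_shiftn N).
pose g_ := fun n x => (f_ (n + N)%N x)%:E.
have mg : forall n, measurable_fun [set: R] (g_ n).
  by move=> n; apply/measurable_EFinP.
pose f := fun x => ((c * \1_[set E] x)%:E).
have gf : forall x, setT x -> g_ ^~ x @ \oo --> f x.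
  move=> x _; rewrite /g_ /f; apply: cvg_EFin; first exact: nearW.
  rewrite /indic; have [->|xE] := eqVneq x E.
    by rewrite mem_set// mulr1 (cvg_shiftn N (f_ ^~ E)).
  rewrite memNset//= ?mulr0; last by move=> /= /eqP; rewrite (negbTE xE).
  by rewrite (cvg_shiftn N (f_ ^~ x)); exact: f0.
have ig : nu.-integrable setT (EFin \o cst M).
  exact: finite_measure_integrable_cst.
have mfl : measurable_fun [set: R] f.
  apply/measurable_EFinP; apply: measurable_funM => //.
have fg : {ae nu, forall x n, setT x -> `|g_ n x| <= (EFin \o cst M) x}%E.
  apply: aeW => x n _; rewrite /g_ /= lee_fin; apply: HN => /=; exact: leq_addl.
have gfa : {ae nu, forall x, setT x -> g_ ^~ x @ \oo --> f x}.
  exact: aeW.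
have [_ _ h] := dominated_convergence measurableT mg mfl gfa ig fg.
have intf : (\int[nu]_(x in setT) f x = (c * fine (nu [set E]))%:E)%E.
  rewrite /f; under eq_integral do rewrite EFinM.
  rewrite integralZl//; last exact: integrable_indic.
  rewrite integral_indic// setIT EFinM fineK//; exact: fin_num_measure.
rewrite intf in h.
move/fine_cvgP : h => [_ h].
exact: h.
Qed.
Section C.
Variable R : realType.
Definition g1 (w : R[i]) (x : R) := ((x - complex.Re w)^+2 + (complex.Im w)^+2)^-1.
Lemma inv_re (w : R[i]) x :
  complex.Re ((Complex x 0 - w)^-1) = (x - complex.Re w) * g1 w x.
Proof. by case: w => a b /=; rewrite /g1 /= sub0r sqrrN. Qed.
Lemma inv_im (w : R[i]) x :
  complex.Im ((Complex x 0 - w)^-1) = complex.Im w * g1 w x.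
Proof. by case: w => a b /=; rewrite /g1 /= sub0r sqrrN mulNr opprK. Qed.
Lemma sqmod_g1 (w : R[i]) x : (sqmod (Complex x 0 - w))^-1 = g1 w x.
Proof. by case: w => a b /=; rewrite /g1 /sqmod /= sub0r sqrrN. Qed.
Lemma imF (m : R[i]) : complex.Im (- m^-1) = complex.Im m / sqmod m.
Proof. by case: m => u v /=; rewrite /sqmod /= opprK. Qed.

Lemma bint (nu : {finite_measure set R -> \bar R}) (f : R -> R) M :
  measurable_fun setT f -> (forall x, `|f x| <= M) ->
  nu.-integrable setT (EFin \o f).
Proof.
move=> mf fM; apply: measurable_bounded_integrable => //.
  by rewrite ltey_eq fin_num_measure.
exists M; split; first exact: num_real.
by move=> y My x _; exact: le_trans (fM x) (ltW My).
Qed.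

Lemma g1_cont (w : R[i]) : complex.Im w != 0 -> continuous (g1 w).
Proof.
move=> e0 x; apply: cvgV.
  by rewrite paddr_eq0 ?sqr_ge0// !sqrf_eq0 negb_and e0 orbT.
apply: cvgD; last exact: cvg_cst.
rewrite expr2; apply: cvgM; apply: cvgB; try exact: cvg_id; exact: cvg_cst.
Qed.

Lemma g1_meas (w : R[i]) : 0 < complex.Im w -> measurable_fun [set: R] (g1 w).
Proof. by move=> h; apply: continuous_measurable_fun; apply: g1_cont; rewrite gt_eqF. Qed.

Lemma g2_meas (w : R[i]) : 0 < complex.Im w ->
  measurable_fun [set: R] (fun x : R => (x - complex.Re w) * g1 w x).
Proof.
move=> h; apply: measurable_funM; last exact: g1_meas.
by apply: measurable_funB.
Qed.

Lemma g1_bd (w : R[i]) (x : R) : 0 < complex.Im w ->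
  `|g1 w x| <= (complex.Im w ^+ 2)^-1.
Proof.
move=> h; rewrite /g1; set t := x - _; set e := complex.Im w.
have e2 : 0 < e ^+ 2 by rewrite exprn_gt0.
rewrite ger0_norm; last by rewrite invr_ge0 addr_ge0 // sqr_ge0.
rewrite lef_pV2 ?posrE //; last by rewrite ltr_wpDl // sqr_ge0.
by rewrite lerDr sqr_ge0.
Qed.

Lemma g2_bd (w : R[i]) (x : R) : 0 < complex.Im w ->
  `|(x - complex.Re w) * g1 w x| <= (complex.Im w)^-1.
Proof.
move=> h; rewrite /g1; set t := x - _; set e := complex.Im w.
have q0 : 0 < t ^+ 2 + e ^+ 2 by rewrite ltr_wpDl ?sqr_ge0 ?exprn_gt0.
rewrite normrM [`|_^-1|]ger0_norm; last by rewrite invr_ge0 ltW.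
rewrite ler_pdivrMr // mulrC ler_pdivlMr //.
have : `|t| ^+ 2 = t ^+ 2 by rewrite real_normK // num_real.
have := normr_ge0 t.
nra.
Qed.

End C.
Arguments g1 {R}.
Section B.
Variable R : realType.
Lemma bd1 (a e t C : R) : 0 < e -> 0 < C -> `|a| <= C * e ->
  `|(e ^+ 2 - a * t) * (t ^+ 2 + e ^+ 2)^-1| <= 1 + C.
Proof.
move=> e0 C0 /ler_normlP [h1 h2].
have q0 : 0 < t ^+ 2 + e ^+ 2 by rewrite ltr_wpDl ?sqr_ge0 ?exprn_gt0.
rewrite normrM [`|_^-1|]ger0_norm; last by rewrite invr_ge0 ltW.
have s1 : 0 <= C * (t - e) ^+ 2 by rewrite mulr_ge0 ?sqr_ge0 // ltW.
have s2 : 0 <= C * (t + e) ^+ 2 by rewrite mulr_ge0 ?sqr_ge0 // ltW.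
have ha : 0 <= a + C * e by lra.
have hb : 0 <= C * e - a by lra.
rewrite -/(_ / _) ler_pdivrMr //; apply/ler_normlP.
have [t0|t0] := leP 0 t.
  have p1 : 0 <= (a + C * e) * t by rewrite mulr_ge0.
  have p2 : 0 <= (C * e - a) * t by rewrite mulr_ge0.
  split; nra.
have p1 : 0 <= (a + C * e) * - t by rewrite mulr_ge0 // oppr_ge0 ltW.
have p2 : 0 <= (C * e - a) * - t by rewrite mulr_ge0 // oppr_ge0 ltW.
split; nra.
Qed.
Lemma bd2 (a e t C : R) : 0 < e -> 0 < C -> `|a| <= C * e ->
  `|(a * e + e * t) * (t ^+ 2 + e ^+ 2)^-1| <= C + 1.
Proof.
move=> e0 C0 /ler_normlP [h1 h2].
have q0 : 0 < t ^+ 2 + e ^+ 2 by rewrite ltr_wpDl ?sqr_ge0 ?exprn_gt0.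
rewrite normrM [`|_^-1|]ger0_norm; last by rewrite invr_ge0 ltW.
have ha : 0 <= a + C * e by lra.
have hb : 0 <= C * e - a by lra.
have h3 : 0 <= (a + C * e) * e by rewrite mulr_ge0 // ltW.
have h4 : 0 <= (C * e - a) * e by rewrite mulr_ge0 // ltW.
have h5 : 0 <= (t + e) ^+ 2 by rewrite sqr_ge0.
have h6 : 0 <= (t - e) ^+ 2 by rewrite sqr_ge0.
rewrite -/(_ / _) ler_pdivrMr //; apply/ler_normlP; split; nra.
Qed.
Lemma bd0 (a e t C : R) : 0 < e -> 0 < C -> `|a| <= C * e ->
  `|(a ^+ 2 + e ^+ 2) * (t ^+ 2 + e ^+ 2)^-1| <= 1 + C ^+ 2.
Proof.
move=> e0 C0 /ler_normlP [h1 h2].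
have q0 : 0 < t ^+ 2 + e ^+ 2 by rewrite ltr_wpDl ?sqr_ge0 ?exprn_gt0.
rewrite normrM [`|_^-1|]ger0_norm; last by rewrite invr_ge0 ltW.
rewrite -/(_ / _) ler_pdivrMr //; apply/ler_normlP; split; nra.
Qed.
End B.
Section D.
Variable R : realType.
Variable nu : {finite_measure set R -> \bar R}.

Lemma I_eq (w : R[i]) : I_transform nu w = rint nu (g1 w).
Proof. by rewrite /I_transform; congr rint; apply/funext => x; rewrite sqmod_g1. Qed.

Lemma reM (w : R[i]) : complex.Re (m_transform nu w) =
  rint nu (fun x => (x - complex.Re w) * g1 w x).
Proof. by rewrite /m_transform /cint /=; congr rint; apply/funext => x; rewrite inv_re. Qed.

Lemma intg1 (w : R[i]) : 0 < complex.Im w -> nu.-integrable setT (EFin \o g1 w).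
Proof. by move=> h; apply: bint; [exact: g1_meas | move=> x; exact: g1_bd]. Qed.

Lemma intg2 (w : R[i]) : 0 < complex.Im w ->
  nu.-integrable setT (EFin \o (fun x => (x - complex.Re w) * g1 w x)).
Proof. by move=> h; apply: bint; [exact: g2_meas | move=> x; exact: g2_bd]. Qed.

Lemma imM (w : R[i]) : 0 < complex.Im w ->
  complex.Im (m_transform nu w) = complex.Im w * I_transform nu w.
Proof.
move=> h; rewrite I_eq /m_transform /cint /= /rint -RintegralZl //; last exact: intg1.
by congr Rintegral; apply/funext => x; rewrite inv_im.
Qed.

Lemma lin (w : R[i]) (k1 k2 : R) : 0 < complex.Im w ->
  rint nu (fun x => (k1 + k2 * (x - complex.Re w)) * g1 w x) =
  k1 * rint nu (g1 w) + k2 * rint nu (fun x => (x - complex.Re w) * g1 w x).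
Proof.
move=> h; rewrite /rint -RintegralZl //; last exact: intg1.
rewrite -RintegralZl //; last exact: intg2.
rewrite -RintegralD //.
- by congr Rintegral; apply/funext => x; rewrite mulrDl mulrA.
- rewrite (_ : EFin \o _ = (fun x => k1%:E * (EFin \o g1 w) x)%E); last first.
    by apply/funext => x /=; rewrite EFinM.
  by apply: integrableZl => //; exact: intg1.
- rewrite (_ : EFin \o _ = (fun x => k2%:E *
      (EFin \o (fun x : R => ((x - complex.Re w) * g1 w x)%R)) x)%E); last first.
    by apply/funext => x /=; rewrite EFinM.
  by apply: integrableZl => //; exact: intg2.
Qed.
End D.

Lemma ImB (R : realType) (a b : R[i]) : complex.Im (a - b) = complex.Im a - complex.Im b.
Proof. by case: a; case: b. Qed.
Lemma ImD (R : realType) (a b : R[i]) : complex.Im (a + b) = complex.Im a + complex.Im b.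
Proof. by case: a; case: b. Qed.

Lemma cvg_eqc (R : realType) (f : nat -> R) c : (forall n, f n = c) -> f @ \oo --> c.
Proof. by move=> h; rewrite (_ : f = cst c); [exact: cvg_cst | apply/funext]. Qed.

Lemma limsq {R : realType} {u : nat -> R} : u @ \oo --> (0:R) ->
  (fun n => u n ^+ 2) @ \oo --> (0:R).
Proof.
move=> h; have -> : (fun n => u n ^+ 2) = (fun n => u n * u n).
  by apply/funext => n; rewrite expr2.
by rewrite -(mul0r 0); apply: cvgM.
Qed.

Lemma lim0 {R : realType} {u v : nat -> R} {l : R} : u @ \oo --> (0:R) -> v @ \oo --> l ->
  (fun n => u n * v n) @ \oo --> (0:R).
Proof. by move=> hu hv; rewrite -(mul0r l); apply: cvgM. Qed.

Theorem lemma3p11 (R : realType) (nac npp nout : nat)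
  (mu : probability R R) (muhat : {finite_measure set R -> \bar R})
  (E : R) (z : nat -> R[i]) :
  assumptionA mu nac npp nout ->
  (* muhat is the measure in the Nevanlinna representation of F_mu *)
  (forall w : R[i], 0 < complex.Im w ->
     F_transform mu w - w = Complex (- first_moment mu) 0 + m_transform muhat w) ->
  (* E is an atom of mu *)
  (0 < mu [set E])%E ->
  (forall n, 0 < complex.Im (z n)) ->
  nontangential_cvg z E ->
  (fun n => I_transform muhat (z n)) @ \oo --> (fine (mu [set E]))^-1 - 1 /\
  (fun n => I_transform mu (z n) / sqmod (m_transform mu (z n)) - 1) @ \oo
     --> (fine (mu [set E]))^-1 - 1.
Proof.
move=> _ hF hE hz [hre him [C [C0 hC]]].
have pfin : mu [set E] \is a fin_num by apply: fin_num_measure.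
set p := fine (mu [set E]).
have p0 : 0 < p by rewrite /p fine_gt0 // hE ltey_eq pfin.
have eqhat n : I_transform muhat (z n) =
    I_transform mu (z n) / sqmod (m_transform mu (z n)) - 1.
  have h := congr1 (@complex.Im R) (hF _ (hz n)).
  rewrite ImB ImD /F_transform imF imM // imM //= add0r in h.
  apply: (mulfI (lt0r_neq0 (hz n))); rewrite /= -h.
  by rewrite mulrBr mulr1 mulrA.
suff P2 : (fun n => I_transform mu (z n) / sqmod (m_transform mu (z n)) - 1)
    @ \oo --> p^-1 - 1.
  by split => //; rewrite (_ : (fun n => _) = (fun n => I_transform mu (z n) /
    sqmod (m_transform mu (z n)) - 1)) //; apply/funext => n; rewrite eqhat.
pose r n := complex.Re (z n); pose e n := complex.Im (z n).
pose a n := r n - E; pose d n := a n ^+ 2 + e n ^+ 2.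
have hd n : 0 < d n by rewrite /d /e ltr_wpDl ?sqr_ge0 // exprn_gt0.
have ha : a @ \oo --> (0:R).
  by rewrite -(subrr E); apply: cvgB => //; exact: cvg_cst.
have he : e @ \oo --> (0:R) by [].
have haN : (fun n => - a n) @ \oo --> (0:R) by rewrite -oppr0; apply: cvgN.
have hd0 : d @ \oo --> (0:R).
  rewrite (_ : d = fun n => a n * a n + e n * e n); last by apply/funext => n; rewrite /d !expr2.
  by rewrite -(addr0 0); apply: cvgD; [exact: (lim0 ha ha)|exact: (lim0 he he)].
have hEr n : E - r n = - a n by rewrite /a opprB.
have hbd : \forall n \near \oo, `|a n| <= C * e n.
  apply: filterS hC => n hn0.
  by move: hn0; rewrite normrM normfV (gtr0_norm (hz n)) ler_pdivrMr.
have g1c x : x != E -> (fun n => g1 (z n) x) @ \oo --> ((x - E) ^+ 2 + 0 ^+ 2)^-1.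
  move=> xE; apply: cvgV.
    by rewrite expr0n /= addr0 sqrf_eq0 subr_eq0.
  apply: cvgD; rewrite !expr2; apply: cvgM => //; apply: cvgB => //; exact: cvg_cst.
have hxr x : (fun n => x - r n) @ \oo --> x - E.
  by apply: cvgB => //; exact: cvg_cst.
pose I n := rint mu (g1 (z n)).
pose U n := rint mu (fun x => (x - r n) * g1 (z n) x).
have eI n : I_transform mu (z n) = I n by rewrite I_eq.
have eS n : sqmod (m_transform mu (z n)) = U n ^+ 2 + (e n * I n) ^+ 2.
  by rewrite /sqmod reM imM ?hz // I_eq.
pose K1 n := rint mu (fun x => (e n ^+ 2 + (- a n) * (x - r n)) * g1 (z n) x).
pose K2 n := rint mu (fun x => (a n * e n + e n * (x - r n)) * g1 (z n) x).
have eK1 n : K1 n = e n ^+ 2 * I n + (- a n) * U n by rewrite /K1 lin ?hz.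
have eK2 n : K2 n = a n * e n * I n + e n * U n by rewrite /K2 lin ?hz.
have eDI n : rint mu (fun x => d n * g1 (z n) x) = d n * I n.
  by rewrite /rint RintegralZl //; exact: intg1.
have eqS n : I_transform mu (z n) / sqmod (m_transform mu (z n)) =
    (d n * I n) / (K1 n * K1 n + K2 n * K2 n).
  have id : K1 n * K1 n + K2 n * K2 n = d n * (U n ^+ 2 + (e n * I n) ^+ 2).
    by rewrite eK1 eK2 /d; ring.
  rewrite eI eS id -mulf_div divff ?mul1r //; exact: lt0r_neq0 (hd n).
have cDI : (fun n => rint mu (fun x => d n * g1 (z n) x)) @ \oo --> 1 * p.
  apply: (@rdct _ _ _ _ E (1 + C ^+ 2)).
  - by move=> n; apply: measurable_funM => //; exact: g1_meas.
  - apply: filterS hbd => n hn x; rewrite /d /g1; exact: bd0 (hz n) C0 hn.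
  - apply: cvg_eqc => n; rewrite /g1 -/(r n) hEr sqrrN -/(e n) -/(d n) divff //.
    exact: lt0r_neq0 (hd n).
  - by move=> x xE; exact: (lim0 hd0 (g1c x xE)).
have cK1 : K1 @ \oo --> 1 * p.
  apply: (@rdct _ _ _ _ E (1 + C)).
  - move=> n; apply: measurable_funM; last exact: g1_meas.
    apply: measurable_funD => //; apply: measurable_funM => //; exact: measurable_funB.
  - apply: filterS hbd => n hn x; rewrite /g1 mulNr; exact: bd1 (hz n) C0 hn.
  - apply: cvg_eqc => n; rewrite /g1 -/(r n) hEr mulrNN sqrrN addrC -/(e n) -/(d n) divff //.
    exact: lt0r_neq0 (hd n).
  - move=> x xE; apply: (lim0 _ (g1c x xE)).
    by rewrite -(addr0 0); apply: cvgD; [exact: (limsq he)|exact: (lim0 haN (hxr x))].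
have cK2 : K2 @ \oo --> 0 * p.
  apply: (@rdct _ _ _ _ E (C + 1)).
  - move=> n; apply: measurable_funM; last exact: g1_meas.
    apply: measurable_funD => //; apply: measurable_funM => //; exact: measurable_funB.
  - apply: filterS hbd => n hn x; rewrite /g1; exact: bd2 (hz n) C0 hn.
  - apply: cvg_eqc => n; rewrite /g1 -/(r n) hEr mulrN [e n * a n]mulrC subrr mul0r //.
  - move=> x xE; apply: (lim0 _ (g1c x xE)).
    by rewrite -(addr0 0); apply: cvgD; [exact: (lim0 ha he)|exact: (lim0 he (hxr x))].
rewrite (_ : (fun n => _) = fun n => (d n * I n) / (K1 n * K1 n + K2 n * K2 n) - 1);
  last by apply/funext => n; rewrite eqS.
have cDI' : (fun n => d n * I n) @ \oo --> 1 * p.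
  by rewrite (_ : (fun n => _) = fun n => rint mu (fun x => d n * g1 (z n) x)) //;
    apply/funext => n; rewrite eDI.
have nz : (1 * p) * (1 * p) + (0 * p) * (0 * p) != 0.
  by rewrite !mul0r !mul1r ?mulr0 addr0 mulf_neq0 // lt0r_neq0.
have L := cvgB (cvgM cDI' (cvgV nz (cvgD (cvgM cK1 cK1) (cvgM cK2 cK2)))) (cvg_cst (1:R)).
have -> : p^-1 - 1 = 1 * p * ((1 * p) * (1 * p) + (0 * p) * (0 * p))^-1 - 1.
  by rewrite !mul0r !mul1r ?mulr0 addr0 invfM mulrA divff ?mul1r // lt0r_neq0.
exact: L.
Qed.
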